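(* Let $\pi\sim M(\phi,\sigma)$ be a ranking of $[m]$ drawn from the Mallows model, and let $1\le\tau\le m$. Then for all $s\le m$, the probability that none of the top $s$ items of the reference ranking $\sigma$ appears among the top $\tau$ positions of $\pi$ satisfies $$\Pr\big(\text{each of the items ranked }1,\dots,s\text{ in }\sigma\text{ is ranked below position }\tau\text{ in }\pi\big)\le\begin{cases}\phi^{\tau s}(1-\phi^{m-\tau})^s/(1-\phi^m)^s&\text{if }\phi<1,\\ (1-\tau/m)^s&\text{if }\phi=1.\end{cases}$$
   Context: The Mallows model $M(\phi,\sigma)$ on rankings of $[m]$, with reference ranking $\sigma$ and dispersion parameter $\phi\in[0,1]$, assigns to a ranking $\pi$ probability $\phi^{d(\pi,\sigma)}/Z(\phi)$, where $d$ is the Kendall-tau distance (the number of pairs of items ordered differently by the two rankings) and $Z(\phi)=\prod_{j=1}^{m}(1+\phi+\dots+\phi^{j-1})$ is the normalizing constant. *)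

(* Defs.v *)
From mathcomp Require Import all_boot all_order all_algebra all_fingroup.
Set Implicit Arguments. Unset Strict Implicit. Unset Printing Implicit Defensive.
Import Order.TTheory GRing.Theory Num.Theory.
Local Open Scope ring_scope.

(* A ranking of the m items 'I_m is a permutation p : 'S_m, where p a is the
   (0-indexed) position of item a; position 0 is the top. *)

Definition kendall (m : nat) (p q : 'S_m) : nat :=
  #|[set ab : 'I_m * 'I_m | (ab.1 < ab.2)%N &&
       ((p ab.1 < p ab.2)%N != (q ab.1 < q ab.2)%N)]|.

Definition mallows_Z (R : realFieldType) (phi : R) (m : nat) : R :=
  \prod_(j < m) \sum_(k < j.+1) phi ^+ k.

Definition mallows_pmf (R : realFieldType) (m : nat) (phi : R) (sigma p : 'S_m) : R :=
  phi ^+ (kendall p sigma) / mallows_Z phi m.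

Definition mallows_prob (R : realFieldType) (m : nat) (phi : R) (sigma : 'S_m)
  (E : {set 'S_m}) : R :=
  \sum_(p in E) mallows_pmf phi sigma p.

(* Event: every item among the top s of sigma (sigma-position < s) is ranked
   strictly below position tau in p, i.e. has 0-indexed position >= tau. *)
Definition top_s_below (m : nat) (sigma : 'S_m) (s tau : nat) : {set 'S_m} :=
  [set p : 'S_m | [forall a : 'I_m, (sigma a < s)%N ==> (tau <= p a)%N]].

(* Main.v *)
Require Import Defs.
From mathcomp Require Import all_boot all_order all_algebra all_fingroup.
From mathcomp Require Import zify ring lra.
Import Order.TTheory GRing.Theory Num.Theory.
Set Implicit Arguments. Unset Strict Implicit. Unset Printing Implicit Defensive.

Definition invn (m : nat) (q : 'S_m) : nat :=
  \sum_(ab : 'I_m * 'I_m) ((ab.1 < ab.2) && (q ab.2 < q ab.1)).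

Definition gsw (m : nat) (x y : 'I_m) (ab : 'I_m * 'I_m) : 'I_m * 'I_m :=
  if (ab.1 == x) && (x < ab.2 < y) then (y, ab.2)
  else if (ab.1 == y) && (x < ab.2 < y) then (x, ab.2) else ab.

Lemma gswK (m : nat) (x y : 'I_m) : x != y -> involutive (gsw x y).
Proof.
move=> nxy [a b]; rewrite /gsw /=.
have nyx : (y == x) = false by rewrite eq_sym (negbTE nxy).
case hb : (x < b < y); rewrite ?andbF ?andbT /=; last first.
  by case: (a == x); case: (a == y); rewrite /= ?hb ?andbF.
case: (a =P x) => [->|nax] /=; first by rewrite nyx hb eqxx.
case: (a =P y) => [->|nay] /=; first by rewrite hb eqxx.
by case: (a =P x) => //; case: (a =P y).
Qed.

Lemma ordeq (m : nat) (a b : 'I_m) : (a == b) = (val a == val b).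
Proof. by []. Qed.

Lemma inv_swap_pt (m : nat) (q : 'S_m) (x y a b : 'I_m) :
  x < y -> q x < q y -> (forall z : 'I_m, x < z < y -> q z < q x) ->
  let c := gsw x y (a, b) in
  ((tperm x y c.1 < tperm x y c.2) && (q c.2 < q c.1) : nat)
  = ((a < b) && (q b < q a)) + ((a, b) == (y, x)).
Proof.
move=> xy qxy hz c.
have hza := hz a; have hzb := hz b.
rewrite /c /gsw xpair_eqE.
have nxy : (x : nat) != y by rewrite neq_ltn xy.
rewrite !ordeq /=.
case: ifP => [/andP[/eqP/val_inj e hb]|h1]; [|case: ifP => [/andP[/eqP/val_inj e hb]|h2]]; try subst a; rewrite /=;
  case: tpermP => [e1|e1|u1 u2]; try subst; case: tpermP => [e2|e2|v1 v2]; try subst;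
  repeat match goal with H : ?u <> ?v |- _ => move/(fun h (e : nat_of_ord u = nat_of_ord v) => h (@val_inj _ _ _ u v e)): H => H end;
  rewrite ?ordeq /=; (try rewrite ?ordeq in h1); (try rewrite ?ordeq in h2); try lia.
Qed.

Lemma inv_swap (m : nat) (q : 'S_m) (x y : 'I_m) :
  x < y -> q x < q y -> (forall z : 'I_m, x < z < y -> q z < q x) ->
  invn (tperm x y * q) = (invn q).+1.
Proof.
move=> xy qxy hz.
have nxy : x != y by apply/negP => /eqP e; rewrite e ltnn in xy.
rewrite /invn (reindex_inj (h := fun ab : 'I_m * 'I_m => (tperm x y ab.1, tperm x y ab.2))) /=; last first.
  by move=> [a b] [c d] /= [/perm_inj -> /perm_inj ->].
under eq_bigr do rewrite !permM !tpermK.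
rewrite (reindex_inj (can_inj (gswK nxy))) /=.
rewrite (eq_bigr (fun ab : 'I_m * 'I_m => ((ab.1 < ab.2) && (q ab.2 < q ab.1) : nat) + (ab == (y, x)))); last first.
  by move=> [a b] _; exact: (@inv_swap_pt m q x y a b xy qxy hz).
rewrite big_split /= -addn1; congr (_ + _).
rewrite (bigD1 (y, x)) //= eqxx big1 // => ab /negbTE -> //.
Qed.

Lemma card_set_sum (T : finType) (P : pred T) : #|[set x | P x]| = (\sum_(x : T) P x)%N.
Proof.
rewrite -sum1_card big_mkcond /=; apply: eq_bigr => x _.
by rewrite inE; case: (P x).
Qed.
Lemma sum_swap (m : nat) (F : 'I_m * 'I_m -> nat) :
  \sum_(ab : 'I_m * 'I_m) F ab = \sum_(ab : 'I_m * 'I_m) F (ab.2, ab.1).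
Proof.
apply: (reindex_inj (h := fun ab : 'I_m * 'I_m => (ab.2, ab.1))).
by move=> [a b] [c d] /= [-> ->].
Qed.

Lemma kendall_pt (m : nat) (p sigma : 'S_m) (a b : 'I_m) :
  ((a < b) && ((p a < p b) != (sigma a < sigma b))) +
  ((b < a) && ((p b < p a) != (sigma b < sigma a)))
  = ((sigma a < sigma b) && (p b < p a)) + ((sigma b < sigma a) && (p a < p b)).
Proof.
  case: (ssrnat.ltngtP a b) => [ab|ab|/val_inj eab]; last by rewrite eab !ltnn.
  all: have nab : a != b by apply/negP=> /eqP e; rewrite e ltnn in ab.
  all: have npab : (p a : nat) != p b by apply/negP => /eqP/val_inj/perm_inj e; rewrite e eqxx in nab.
  all: have nsab : (sigma a : nat) != sigma b by apply/negP => /eqP/val_inj/perm_inj e; rewrite e eqxx in nab.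
  all: lia.
Qed.

Lemma kendall_inv (m : nat) (p sigma : 'S_m) :
  kendall p sigma = invn (sigma^-1 * p)%g.
Proof.
rewrite /kendall card_set_sum /invn.
pose l (ab : 'I_m * 'I_m) : nat := (ab.1 < ab.2) && ((p ab.1 < p ab.2) != (sigma ab.1 < sigma ab.2)).
change (\sum_ab l ab = \sum_(ab : 'I_m * 'I_m) ((ab.1 < ab.2) && ((sigma^-1 * p)%g ab.2 < (sigma^-1 * p)%g ab.1))).
pose r (ab : 'I_m * 'I_m) : nat := (sigma ab.1 < sigma ab.2) && (p ab.2 < p ab.1).
have -> : \sum_(ab : 'I_m * 'I_m) ((ab.1 < ab.2) && ((sigma^-1 * p)%g ab.2 < (sigma^-1 * p)%g ab.1)) 
   = \sum_ab r ab.
  rewrite (reindex_inj (h := fun ab : 'I_m * 'I_m => (sigma ab.1, sigma ab.2))) /=.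
    by apply: eq_bigr => -[a b] _; rewrite !permM !permK.
  by move=> [a b] [c d] /= [/perm_inj -> /perm_inj ->].
have H : forall ab, l ab + l (ab.2, ab.1) = r ab + r (ab.2, ab.1).
  by move=> [a b]; apply: kendall_pt.
have : \sum_ab l ab + \sum_ab l ab = \sum_ab r ab + \sum_ab r ab.
  rewrite {2}(sum_swap l) {2}(sum_swap r) -!big_split /=.
  by apply: eq_bigr => ab _; apply: H.
lia.
Qed.

Local Open Scope ring_scope.

Definition wt (R : realFieldType) (phi : R) (m : nat) (q : 'S_m) : R := phi ^+ invn q.
Definition Wt (R : realFieldType) (phi : R) (m : nat) (F : {set 'S_m}) (t : nat) (x : 'I_m) : R :=
  \sum_(q in F | q x == t :> nat) wt phi q.

Lemma W_consec (R : realFieldType) (phi : R) (m : nat) (F : {set 'S_m}) (S : {set 'I_m}) (t : nat) (x y : 'I_m) :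
  (forall q, q \in F -> forall a, (t <= q a)%N = (a \in S)) ->
  (forall q, q \in F -> forall a b, a \in S -> b \in S -> (tperm a b * q)%g \in F) ->
  x \in S -> y \in S -> (x < y)%N -> (forall z, z \in S -> ~~ ((x < z) && (z < y)))%N ->
  Wt phi F t y = phi * Wt phi F t x.
Proof.
move=> h1 h2 xS yS xy hz.
rewrite /Wt (reindex_inj (h := mul (tperm x y)) (inv_inj (tpermKg x y))) mulr_sumr.
symmetry; apply: eq_big => q.
  rewrite permM tpermR; case qF: (q \in F).
    by rewrite (h2 _ qF _ _ xS yS).
  case E: ((tperm x y * q)%g \in F) => //=.
  by have := h2 _ E x y xS yS; rewrite tpermKg qF.
move=> /andP[qF /eqP qx].
rewrite /wt inv_swap ?exprS //.
- have ty : (t <= q y)%N by rewrite (h1 _ qF).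
  rewrite qx ltn_neqAle ty andbT; apply/negP => /eqP e.
  have /val_inj/perm_inj exy : (q x : nat) = q y by rewrite qx.
  by rewrite exy ltnn in xy.
move=> z /andP[xz zy]; rewrite qx.
case zS: (z \in S); first by have := hz _ zS; rewrite xz zy.
by rewrite ltnNge (h1 _ qF) zS.
Qed.

Lemma sorted_enum (m : nat) (S : {set 'I_m}) : sorted ltn (map val (enum S)).
Proof.
rewrite -[enum _](eq_filter (mem_enum _)).
rewrite -(eq_filter (mem_map val_inj _)) -filter_map.
by rewrite (sorted_filter ltn_trans) // unlock val_ord_enum iota_ltn_sorted.
Qed.

Lemma lt_nth (m : nat) (S : {set 'I_m}) (x0 : 'I_m) (i j : nat) :
  (i < #|S|)%N -> (j < #|S|)%N ->
  (nth x0 (enum S) i < nth x0 (enum S) j)%N = (i < j)%N.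
Proof.
move=> ik jk.
have hs := sorted_ltn_nth ltn_trans (val x0) (sorted_enum S).
have sz : size (map val (enum S)) = #|S| by rewrite size_map cardE.
have H : forall a b, (a < #|S|)%N -> (b < #|S|)%N -> (a < b)%N ->
   (nth x0 (enum S) a < nth x0 (enum S) b)%N.
  move=> a b ak bk ab; have := hs a b; rewrite !inE sz !(nth_map x0) -?cardE //.
  by move=> /(_ ak bk ab).
case: (ssrnat.ltngtP i j) => [ij|ji|->]; last by rewrite ltnn.
  by rewrite H.
by apply/negbTE; rewrite -leqNgt ltnW // H.
Qed.

Lemma nth_enum_in (m : nat) (S : {set 'I_m}) (x0 : 'I_m) (i : nat) :
  (i < #|S|)%N -> nth x0 (enum S) i \in S.
Proof. by move=> ik; rewrite -mem_enum mem_nth // -cardE. Qed.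

Lemma in_enum_nth (m : nat) (S : {set 'I_m}) (x0 : 'I_m) (z : 'I_m) :
  z \in S -> exists2 i, (i < #|S|)%N & nth x0 (enum S) i = z.
Proof.
move=> zS; exists (index z (enum S)); first by rewrite cardE index_mem mem_enum.
by rewrite nth_index // mem_enum.
Qed.

Lemma W_geom (R : realFieldType) (phi : R) (m : nat) (F : {set 'S_m}) (S : {set 'I_m}) (t : nat) (x0 : 'I_m) :
  (forall q, q \in F -> forall a, (t <= q a)%N = (a \in S)) ->
  (forall q, q \in F -> forall a b, a \in S -> b \in S -> (tperm a b * q)%g \in F) ->
  forall j, (j < #|S|)%N -> Wt phi F t (nth x0 (enum S) j) = phi ^+ j * Wt phi F t (nth x0 (enum S) 0).
Proof.
move=> h1 h2; elim=> [|j IH] jk; first by rewrite mul1r.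
have jk' : (j < #|S|)%N by apply: ltnW.
rewrite (W_consec phi h1 h2 (nth_enum_in x0 jk') (nth_enum_in x0 jk)).
- by rewrite IH // exprS mulrA.
- by rewrite lt_nth.
move=> z zS; have [i ik <-] := in_enum_nth x0 zS.
by rewrite !lt_nth //; apply/negP => /andP[a b]; rewrite ltnS leqNgt a in b.
Qed.

Definition G (R : realFieldType) (phi : R) (n : nat) : R := \sum_(j < n) phi ^+ j.

Lemma sum_W_all (R : realFieldType) (phi : R) (m : nat) (F : {set 'S_m}) (S : {set 'I_m}) (t : nat) (x0 : 'I_m) :
  (forall q, q \in F -> forall a, (t <= q a)%N = (a \in S)) ->
  (forall q, q \in F -> forall a b, a \in S -> b \in S -> (tperm a b * q)%g \in F) ->
  \sum_(x in S) Wt phi F t x = G phi #|S| * Wt phi F t (nth x0 (enum S) 0).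
Proof.
move=> h1 h2.
rewrite -big_enum (big_nth x0) big_mkord -cardE /G mulr_suml.
by apply: eq_bigr => j _; rewrite (W_geom phi x0 h1 h2).
Qed.

Lemma ge_nth (m : nat) (S : {set 'I_m}) (x0 : 'I_m) (j : nat) :
  (j < #|S|)%N -> (j <= nth x0 (enum S) j)%N.
Proof.
elim: j => // j IH jk.
have jk' : (j < #|S|)%N by apply: ltnW.
have := lt_nth x0 jk' jk; rewrite ltnSn => h.
by apply: leq_ltn_trans (IH jk') h.
Qed.

Lemma small_nth (m : nat) (S : {set 'I_m}) (x0 : 'I_m) (s : nat) :
  (s <= m)%N -> (forall i : 'I_m, (i < s)%N -> i \in S) ->
  forall j, (j < s)%N -> (j < #|S|)%N -> nth x0 (enum S) j = j :> nat.
Proof.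
move=> sm hs; elim=> [|j IH] js jk.
  have z0 : (0 < m)%N by apply: leq_trans js sm.
  have [i ik ei] := in_enum_nth x0 (hs (Ordinal z0) js).
  have := lt_nth x0 ik jk; rewrite ei /= ltn0.
  by move/negbT; rewrite -leqNgt leqn0 => /eqP.
have jk' : (j < #|S|)%N by apply: ltnW.
have e := IH (ltnW js) jk'.
have z1 : (j.+1 < m)%N by apply: leq_trans js sm.
have [i ik ei] := in_enum_nth x0 (hs (Ordinal z1) js).
have ji : (j < i)%N by rewrite -(lt_nth x0 jk' ik) ei e /=.
have h1 := lt_nth x0 jk' jk; rewrite ltnSn e in h1.
case: (ltngtP i j.+1) => [ij|ij|eij]; first by rewrite ltnS leqNgt ji in ij.
  have := lt_nth x0 jk ik; rewrite ij ei /= => h2; by move: h2; rewrite ltnS leqNgt h1.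
by rewrite -eij ei.
Qed.

Lemma Gs_eq (R : realFieldType) (phi : R) (s k : nat) :
  \sum_(j < k | (s <= j)%N) phi ^+ j = phi ^+ s * G phi (k - s).
Proof.
elim: k => [|k IH]; first by rewrite big_ord0 sub0n /G big_ord0 mulr0.
rewrite big_mkcond big_ord_recr /= -big_mkcond IH.
case: (leqP s k) => sk.
  by rewrite subSn // /G big_ord_recr /= mulrDr -exprD subnKC.
have -> : (k.+1 - s = k - s)%N by lia.
by rewrite addr0.
Qed.

Lemma sum_W_s (R : realFieldType) (phi : R) (m : nat) (F : {set 'S_m}) (S : {set 'I_m}) (t s : nat) (x0 : 'I_m) :
  (forall q, q \in F -> forall a, (t <= q a)%N = (a \in S)) ->
  (forall q, q \in F -> forall a b, a \in S -> b \in S -> (tperm a b * q)%g \in F) ->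
  (s <= m)%N -> (forall i : 'I_m, (i < s)%N -> i \in S) ->
  \sum_(x in S | (s <= x)%N) Wt phi F t x = phi ^+ s * G phi (#|S| - s) * Wt phi F t (nth x0 (enum S) 0).
Proof.
move=> h1 h2 sm hs.
rewrite -big_enum_cond (big_nth x0) big_mkord -Gs_eq mulr_suml.
rewrite -cardE.
apply: eq_big => j.
  case: (ltnP j s) => js; first by rewrite (small_nth x0 sm hs js) // leqNgt js.
  by rewrite (leq_trans js) // ge_nth.
by move=> _; rewrite (W_geom phi x0 h1 h2).
Qed.

Lemma sum_by_top (R : realFieldType) (m : nat) (F : {set 'S_m}) (S : {set 'I_m}) (t : nat)
  (P : pred 'S_m) (f : 'S_m -> R) :
  (t < m)%N -> (forall q, q \in F -> forall a, (t <= q a)%N = (a \in S)) ->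
  \sum_(q in F | P q) f q = \sum_(x in S) \sum_(q in F | P q && (q x == t :> nat)) f q.
Proof.
move=> tm h1; pose t' := Ordinal tm.
rewrite (partition_big (fun q : 'S_m => (q^-1)%g t') (mem S)); last first.
  by move=> q /andP[qF _]; rewrite /= -(h1 q qF) permKV.
apply: eq_bigr => x _; apply: eq_bigl => q.
rewrite -andbA; congr (_ && (_ && _)).
apply/eqP/eqP => [<-|e]; first by rewrite permKV.
apply: (@perm_inj _ q); rewrite permKV; apply: val_inj; by rewrite /= -e.
Qed.



Lemma cnt_ge (m t : nat) : (\sum_(a < m) ((t <= a)%N : nat))%N = (m - t)%N.
Proof.
elim: m => [|m IH]; first by rewrite big_ord0.
rewrite big_ord_recr /= IH; case: (leqP t m) => tm; lia.
Qed.

Lemma card_ge (m t : nat) : #|[set a : 'I_m | (t <= a)%N]| = (m - t)%N.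
Proof. by rewrite card_set_sum cnt_ge. Qed.

Lemma card_key (m t : nat) (q : 'S_m) : #|[set a : 'I_m | (t <= q a)%N]| = (m - t)%N.
Proof.
rewrite -(card_ge m t) -(@card_preimset _ q [set a : 'I_m | (t <= a)%N] (@perm_inj _ q)).
by apply: eq_card => a; rewrite !inE.
Qed.

Lemma first_nth (m : nat) (S : {set 'I_m}) (x0 z : 'I_m) :
  z \in S -> (forall a, a \in S -> (z <= a)%N) -> nth x0 (enum S) 0 = z.
Proof.
move=> zS hz.
have k0 : (0 < #|S|)%N by apply/card_gt0P; exists z.
apply: val_inj; apply/eqP; rewrite eqn_leq hz ?nth_enum_in // andbT.
have [i ik <-] := in_enum_nth x0 zS.
by rewrite leqNgt lt_nth.
Qed.

Definition Fix (m t : nat) : {set 'S_m} := [set q : 'S_m | [forall i : 'I_m, (i < t)%N ==> (q i == i)]].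
Definition D (R : realFieldType) (phi : R) (m t : nat) : R := \sum_(q in Fix m t) wt phi q.

Lemma Fix_key (m t : nat) (q : 'S_m) : q \in Fix m t -> forall a, (t <= q a)%N = (a \in [set a : 'I_m | (t <= a)%N]).
Proof.
rewrite inE => /forallP h a; rewrite inE.
case: (ltnP a t) => at_.
  by have /implyP/(_ at_)/eqP -> := h a; rewrite leqNgt at_.
apply/negP => /negP; rewrite -ltnNge => qa.
have /implyP/(_ qa)/eqP/perm_inj e := h (q a).
by move: qa; rewrite e ltnNge at_.
Qed.

Lemma Fix_swap (m t : nat) (q : 'S_m) : q \in Fix m t -> forall a b,
  a \in [set a : 'I_m | (t <= a)%N] -> b \in [set a : 'I_m | (t <= a)%N] -> (tperm a b * q)%g \in Fix m t.
Proof.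
move=> qF a b; rewrite !inE => ta tb; move: qF; rewrite /Fix !inE => /forallP h.
apply/forallP => i; apply/implyP => it.
rewrite permM tpermD; first by have /implyP/(_ it) := h i.
  by apply/negP => /eqP e; rewrite e leqNgt it in ta.
by apply/negP => /eqP e; rewrite e leqNgt it in tb.
Qed.

Lemma D_step (R : realFieldType) (phi : R) (m t : nat) : (t < m)%N ->
  D phi m t = G phi (m - t) * D phi m t.+1.
Proof.
move=> tm; pose t' := Ordinal tm.
have h1 := @Fix_key m t; have h2 := @Fix_swap m t.
rewrite /D (eq_bigl (fun q => (q \in Fix m t) && xpredT q)); last by move=> q; rewrite andbT.
rewrite (sum_by_top _ _ tm h1).
rewrite (eq_bigr (fun x => Wt phi (Fix m t) t x)); last by move=> x _; apply: eq_bigl => q.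
rewrite (sum_W_all phi t' h1 h2) card_ge.
rewrite (@first_nth _ _ t' t'); last 2 first.
- by rewrite inE.
- by move=> a; rewrite inE.
congr (_ * _); apply: eq_bigl => q; rewrite !inE.
apply/idP/idP.
  move=> /andP[/forallP h /eqP qt]; apply/forallP => i; apply/implyP; rewrite ltnS leq_eqVlt.
  case/orP => [/eqP ei|it]; last by have /implyP/(_ it) := h i.
  have -> : i = t' by apply: val_inj.
  by apply/eqP/val_inj.
move=> /forallP h; apply/andP; split.
  apply/forallP => i; apply/implyP => it; have /implyP := h i; apply; by apply: ltnW.
by have /implyP/(_ (ltnSn t))/eqP -> := h t'.
Qed.

Lemma invn1 (m : nat) : invn (1 : 'S_m)%g = 0%N.
Proof. by rewrite /invn big1 // => ab _; rewrite !perm1; case: ltngtP. Qed.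

Lemma D_m (R : realFieldType) (phi : R) (m : nat) : D phi m m = 1.
Proof.
rewrite /D (eq_bigl (pred1 1%g)) ?big_pred1_eq /wt ?invn1 //.
move=> q; rewrite /Fix inE /=; apply/forallP/eqP => [h|->].
  by apply/permP => i; rewrite perm1; have /implyP/(_ (ltn_ord i))/eqP := h i.
by move=> i; rewrite perm1 eqxx implybT.
Qed.

Lemma total_Z (R : realFieldType) (phi : R) (m : nat) : \sum_(q : 'S_m) wt phi q = mallows_Z phi m.
Proof.
have H : forall n, (n <= m)%N -> D phi m (m - n) = \prod_(j < n) G phi j.+1.
  elim=> [|n IH] nm; first by rewrite subn0 D_m big_ord0.
  rewrite D_step; last by lia.
  rewrite big_ord_recr /= mulrC -IH; last by apply: ltnW.
  have -> : (m - (m - n.+1) = n.+1)%N by lia.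
  by have -> : ((m - n.+1).+1 = m - n)%N by lia.
have := H m (leqnn m); rewrite subnn /D /mallows_Z => <-.
by apply: eq_bigl => q; rewrite /Fix inE; apply/esym/forallP => i.
Qed.

Definition Ev (m s t : nat) : {set 'S_m} := [set q : 'S_m | [forall i : 'I_m, (i < s)%N ==> (t <= q i)%N]].
Definition Pv (R : realFieldType) (phi : R) (m s t : nat) : R := \sum_(q in Ev m s t) wt phi q.
Definition key (m t : nat) (q : 'S_m) : {set 'I_m} := [set a : 'I_m | (t <= q a)%N].

Lemma P_step (R : realFieldType) (phi : R) (m s t : nat) : (t < m)%N -> (s <= m)%N ->
  G phi (m - t) * Pv phi m s t.+1 = phi ^+ s * G phi (m - t - s) * Pv phi m s t.
Proof.
move=> tm sm; pose t' := Ordinal tm.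
pose A := [set i : 'I_m | (i < s)%N].
rewrite /Pv (partition_big (key t) (fun S => A \subset S)); last first.
  move=> q; rewrite /Ev inE => /forallP h; apply/subsetP => i; rewrite !inE => is_.
  by have /implyP/(_ is_) := h i; apply: ltnW.
rewrite [X in _ = _ * X](partition_big (key t) (fun S => A \subset S)); last first.
  move=> q; rewrite /Ev inE => /forallP h; apply/subsetP => i; rewrite !inE => is_.
  by have /implyP/(_ is_) := h i.
rewrite !mulr_sumr; apply: eq_bigr => S AS.
pose FS := [set q : 'S_m | key t q == S].
have hs : forall i : 'I_m, (i < s)%N -> i \in S.
  by move=> i is_; apply: (subsetP AS); rewrite inE.
have h1 : forall q, q \in FS -> forall a, (t <= q a)%N = (a \in S).
  by move=> q; rewrite inE => /eqP <- a; rewrite inE.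
have h2 : forall q, q \in FS -> forall a b, a \in S -> b \in S -> (tperm a b * q)%g \in FS.
  move=> q qF a b aS bS; rewrite inE; apply/eqP/setP => z; rewrite inE permM (h1 q qF).
  by case: tpermP => [->|->|]; rewrite ?aS ?bS.
have E0 : \sum_(q in Ev m s t | key t q == S) wt phi q = \sum_(q in FS) wt phi q.
  apply: eq_bigl => q; rewrite [q \in FS]inE andb_idl // => /eqP kq; rewrite /Ev inE.
  apply/forallP => i; apply/implyP => is_; have := hs i is_; by rewrite -kq inE.
have E1 : \sum_(q in Ev m s t.+1 | key t q == S) wt phi q = \sum_(q in FS | q \in Ev m s t.+1) wt phi q.
  by apply: eq_bigl => q; rewrite [in RHS]inE andbC.
rewrite E0 E1.
have [F0|[q0 q0F]] := set_0Vmem FS.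
  have Z1 : \sum_(q in FS) wt phi q = 0 by apply: big1 => q; rewrite F0 inE.
  have Z2 : \sum_(q in FS | q \in Ev m s t.+1) wt phi q = 0 by apply: big1 => q; rewrite F0 inE.
  by rewrite Z1 Z2 !mulr0.
have cS : #|S| = (m - t)%N by move: q0F; rewrite inE => /eqP <-; rewrite card_key.
have EF : \sum_(q in FS) wt phi q = \sum_(q in FS | xpredT q) wt phi q.
  by apply: eq_bigl => q; rewrite andbT.
rewrite EF (sum_by_top _ _ tm h1) (sum_by_top _ _ tm h1).
rewrite [X in _ = _ * X](eq_bigr (fun x => Wt phi FS t x)); last by move=> x _; apply: eq_bigl => q.
rewrite (sum_W_all phi t' h1 h2).
rewrite (eq_bigr (fun x : 'I_m => if (s <= x)%N then Wt phi FS t x else 0)); last first.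
  move=> x xS; case: ifP => sx.
    apply: eq_bigl => q; case qF: (q \in FS) => //=; case qx: (q x == t :> nat); rewrite ?andbF ?andbT //.
    rewrite /Ev inE; apply/forallP => i; apply/implyP => is_.
    have := h1 q qF i; rewrite hs // ltn_neqAle => ->; rewrite andbT.
    apply/negP => /eqP e; have /val_inj/perm_inj ei : (q i : nat) = q x by rewrite -e; apply/esym/eqP.
    by rewrite -ei leqNgt is_ in sx.
  apply: big1 => q /andP[qF /andP[]]; rewrite /Ev inE => /forallP h /eqP qx.
  by have /implyP := h x; rewrite ltnNge sx qx ltnn => /(_ isT).
rewrite -big_mkcondr (sum_W_s phi t' h1 h2 sm hs) cS.
by rewrite -mulr_sumr -/(G phi (m - t - s)) mulrCA.
Qed.

Lemma G0 (R : realFieldType) (phi : R) : G phi 0 = 0.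
Proof. by rewrite /G big_ord0. Qed.

Lemma G_add (R : realFieldType) (phi : R) (a b : nat) : G phi (a + b) = G phi a + phi ^+ a * G phi b.
Proof. by rewrite /G big_split_ord /= mulr_sumr; congr (_ + _); apply: eq_bigr => i _; rewrite exprD. Qed.

Lemma G_ge0 (R : realFieldType) (phi : R) (n : nat) : 0 <= phi -> 0 <= G phi n.
Proof. by move=> p0; rewrite /G sumr_ge0 // => i _; rewrite exprn_ge0. Qed.

Lemma G1 (R : realFieldType) (phi : R) : G phi 1 = 1.
Proof. by rewrite /G big_ord1 expr0. Qed.

Lemma G_gt0 (R : realFieldType) (phi : R) (n : nat) : 0 <= phi -> (0 < n)%N -> 0 < G phi n.
Proof.
move=> p0; case: n => // n _.
rewrite -add1n G_add G1 expr1.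
have := mulr_ge0 p0 (G_ge0 n p0); lra.
Qed.

Lemma G_ineq (R : realFieldType) (phi : R) (a i c : nat) : 0 <= phi -> phi <= 1 ->
  G phi a * G phi (a + i + c) <= G phi (a + i) * G phi (a + c).
Proof.
move=> p0 p1.
rewrite -addnA !G_add.
have h1 : 0 <= phi ^+ a * G phi a * G phi c * (1 - phi ^+ i).
  rewrite !mulr_ge0 ?exprn_ge0 ?G_ge0 // subr_ge0 exprn_ile1 //.
have h2 : 0 <= phi ^+ a * phi ^+ a * G phi i * G phi c.
  by rewrite !mulr_ge0 ?exprn_ge0 ?G_ge0.
rewrite -subr_ge0.
have -> : (G phi a + phi ^+ a * G phi i) * (G phi a + phi ^+ a * G phi c) -
   G phi a * (G phi a + phi ^+ a * (G phi i + phi ^+ i * G phi c)) =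
   phi ^+ a * G phi a * G phi c * (1 - phi ^+ i) + phi ^+ a * phi ^+ a * G phi i * G phi c by ring.
by rewrite addr_ge0.
Qed.

Lemma fac_ineq (R : realFieldType) (phi : R) (m tau i : nat) : 0 <= phi -> phi <= 1 ->
  (tau <= m)%N -> (i < m)%N ->
  G phi (m - tau - i) / G phi (m - i) <= G phi (m - tau) / G phi m.
Proof.
move=> p0 p1 tm im.
have gmi : 0 < G phi (m - i) by apply: G_gt0 => //; lia.
have gm : 0 < G phi m by apply: G_gt0 => //; lia.
case: (leqP (m - tau) i) => hi.
  have -> : (m - tau - i = 0)%N by lia.
  by rewrite G0 mul0r divr_ge0 ?G_ge0 // ltW.
rewrite ler_pdivrMr // mulrAC ler_pdivlMr //.
have := G_ineq (m - tau - i) i tau p0 p1.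
have -> : (m - tau - i + i = m - tau)%N by lia.
have -> : (m - tau + tau = m)%N by lia.
have -> : (m - tau - i + tau = m - i)%N by lia.
done.
Qed.

Lemma prod_sym (R : realFieldType) (H : nat -> R) (a b : nat) :
  \prod_(i < a) H i * \prod_(u < b) H (a + u)%N = \prod_(u < b) H u * \prod_(i < a) H (b + i)%N.
Proof.
have E : forall n k, \prod_(j < n + k) H j = \prod_(i < n) H i * \prod_(u < k) H (n + u)%N.
  by move=> n k; rewrite big_split_ord.
by rewrite -E -E addnC.
Qed.

Lemma P_iter (R : realFieldType) (phi : R) (m s t : nat) : (t <= m)%N -> (s <= m)%N ->
  Pv phi m s t * \prod_(u < t) G phi (m - u) =
  mallows_Z phi m * phi ^+ (s * t) * \prod_(u < t) G phi (m - u - s).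
Proof.
move=> + sm; elim: t => [|t IH] tm.
  rewrite !big_ord0 !mulr1 muln0 expr0 mulr1 -total_Z /Pv.
  by apply: eq_bigl => q; rewrite /Ev inE; apply/forallP => i; apply/implyP.
rewrite !big_ord_recr /= mulnS exprD.
transitivity ((G phi (m - t) * Pv phi m s t.+1) * \prod_(i < t) G phi (m - i)); first by ring.
rewrite P_step //.
transitivity (phi ^+ s * G phi (m - t - s) * (Pv phi m s t * \prod_(i < t) G phi (m - i))); first by ring.
rewrite IH; last by apply: ltnW.
ring.
Qed.

Lemma bound_core (R : realFieldType) (phi : R) (m tau s : nat) :
  0 <= phi -> phi <= 1 -> (tau <= m)%N -> (s <= m)%N ->
  \prod_(u < tau) G phi (m - u - s) / \prod_(u < tau) G phi (m - u) <=
  (G phi (m - tau) / G phi m) ^+ s.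
Proof.
move=> p0 p1 tm sm.
have P2p : 0 < \prod_(u < tau) G phi (m - u).
  by apply: prodr_gt0 => u _; apply: G_gt0 => //; have := ltn_ord u; lia.
have Q2p : 0 < \prod_(i < s) G phi (m - i).
  by apply: prodr_gt0 => u _; apply: G_gt0 => //; have := ltn_ord u; lia.
have E := prod_sym (fun j => G phi (m - j)) s tau.
have e1 : \prod_(u < tau) G phi (m - u - s) = \prod_(u < tau) G phi (m - (s + u)).
  by apply: eq_bigr => u _; congr (G phi _); lia.
have e2 : \prod_(i < s) G phi (m - tau - i) = \prod_(i < s) G phi (m - (tau + i)).
  by apply: eq_bigr => u _; congr (G phi _); lia.
have -> : \prod_(u < tau) G phi (m - u - s) / \prod_(u < tau) G phi (m - u) =
          \prod_(i < s) G phi (m - tau - i) / \prod_(i < s) G phi (m - i).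
  apply/eqP; rewrite eqr_div ?(gt_eqF P2p) ?(gt_eqF Q2p) // e1 e2 [X in X == _]mulrC E mulrC.
  done.
rewrite -prodf_div [X in _ <= X](_ : _ = \prod_(i < s) (G phi (m - tau) / G phi m)); last by rewrite prodr_const card_ord.
apply: ler_prod => i _; rewrite divr_ge0 ?G_ge0 //=.
by apply: fac_ineq => //; have := ltn_ord i; lia.
Qed.

Lemma prob_eq (R : realFieldType) (m : nat) (phi : R) (sigma : 'S_m) (tau s : nat) :
  mallows_prob phi sigma (top_s_below sigma s tau) = Pv phi m s tau / mallows_Z phi m.
Proof.
rewrite /mallows_prob /mallows_pmf -mulr_suml /Pv; congr (_ / _).
rewrite (reindex_inj (h := mulg sigma) (mulgI sigma)).
apply: eq_big => q.
  rewrite /top_s_below /Ev !inE; apply/forallP/forallP => h i.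
    by have := h ((sigma^-1)%g i); rewrite permM permKV.
  by rewrite permM; apply: h.
by move=> _; rewrite kendall_inv mulKg.
Qed.

Unset Implicit Arguments.
Theorem lemma2 (R : realFieldType) (m : nat) (phi : R) (sigma : 'S_m)
  (tau s : nat) :
  0 <= phi -> phi <= 1 ->
  (1 <= tau)%N -> (tau <= m)%N -> (s <= m)%N ->
  mallows_prob phi sigma (top_s_below sigma s tau) <=
    (if phi < 1 then
       phi ^+ (tau * s) * (1 - phi ^+ (m - tau)) ^+ s / (1 - phi ^+ m) ^+ s
     else (1 - tau%:R / m%:R) ^+ s).
Proof.
move=> p0 p1 t1 tm sm.
have Zp : 0 < mallows_Z phi m.
  by apply: prodr_gt0 => j _; have := G_gt0 p0 (ltn0Sn j); rewrite /G.
have P2p : 0 < \prod_(u < tau) G phi (m - u).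
  by apply: prodr_gt0 => u _; apply: G_gt0 => //; have := ltn_ord u; lia.
have gm : 0 < G phi m by apply: G_gt0 => //; lia.
have HP := P_iter phi tm sm.
rewrite prob_eq.
have -> : Pv phi m s tau = mallows_Z phi m * phi ^+ (s * tau) * \prod_(u < tau) G phi (m - u - s) / \prod_(u < tau) G phi (m - u).
  by rewrite -HP mulfK // gt_eqF.
have -> : (if phi < 1 then
       phi ^+ (tau * s) * (1 - phi ^+ (m - tau)) ^+ s / (1 - phi ^+ m) ^+ s
     else (1 - tau%:R / m%:R) ^+ s) = phi ^+ (s * tau) * (G phi (m - tau) / G phi m) ^+ s.
  have E : forall n, 1 - phi ^+ n = (1 - phi) * G phi n.
    by move=> n; have := subrX1 phi n; rewrite /G => h; rewrite -opprB h -mulNr opprB.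
  case: ifP => ph.
    rewrite !E !exprMn mulnC ?exprVn.
    have h1 : (1 - phi) ^+ s != 0 by rewrite expf_neq0 // subr_eq0 eq_sym lt_eqF.
    have h2 : G phi m ^+ s != 0 by rewrite expf_neq0 // gt_eqF.
    field.
    by rewrite h1 h2.
  have -> : phi = 1 by apply/eqP; rewrite eq_le p1 /= leNgt ph.
  have G1n : forall n, G (1 : R) n = n%:R.
    by move=> n; rewrite /G (eq_bigr (fun _ => (1 : R))) ?sumr_const ?card_ord // => i _; rewrite expr1n.
  rewrite !G1n expr1n mul1r natrB //.
  have mn : (m%:R : R) != 0 by rewrite pnatr_eq0; lia.
  congr (_ ^+ _); field.
  done.
set Z := mallows_Z phi m.
have -> : Z * phi ^+ (s * tau) * \prod_(u < tau) G phi (m - u - s) / \prod_(u < tau) G phi (m - u) / Z =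
   phi ^+ (s * tau) * (\prod_(u < tau) G phi (m - u - s) / \prod_(u < tau) G phi (m - u)).
  have : Z != 0 by rewrite gt_eqF.
  have : \prod_(u < tau) G phi (m - u) != 0 by rewrite gt_eqF.
  move=> h1 h2; field.
  by rewrite h1 h2.
apply: ler_wpM2l; first by rewrite exprn_ge0.
exact: bound_core.
Qed.
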